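(* Let $M$ be a tame paving matroid of rank $n$ on $[d]$ with set of dependent hyperplanes $\mathcal{L}$. Then for every $\gamma\in V_{\mathcal{C}(M)}$ and every $\epsilon>0$ there exists $\widetilde\gamma=(\widetilde\gamma_1,\ldots,\widetilde\gamma_d)\in V_{\mathcal{C}(M)}$ with $\|\gamma_p-\widetilde\gamma_p\|<\epsilon$ for all $p\in[d]$ such that $\dim\widetilde\gamma_l=n-1$ for every $l\in\mathcal{L}$, where $\widetilde\gamma_l=\operatorname{span}(\widetilde\gamma_p:p\in l)$.
   Context: A matroid of rank $n$ is paving if every circuit has size $n$ or $n+1$; a dependent hyperplane is a maximal subset of size at least $n$ all of whose $n$-subsets are circuits; tame means any three distinct dependent hyperplanes have empty intersection. The circuit variety $V_{\mathcal{C}(M)}$ is the set of tuples $(\gamma_1,\ldots,\gamma_d)$ of vectors in $\mathbb{C}^n$ such that $(\gamma_p)_{p\in S}$ is linearly dependent for every dependent set $S$ of $M$. *)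

(* Defs.v *)
From HB Require Import structures.
From mathcomp Require Import all_boot all_order all_algebra.
From mathcomp Require Import reals.
From mathcomp Require Export complex.
Set Implicit Arguments. Unset Strict Implicit. Unset Printing Implicit Defensive.
Import Order.TTheory GRing.Theory Num.Theory.
Local Open Scope ring_scope.

Definition is_matroid (d : nat) (indep : {set 'I_d} -> bool) : Prop :=
  [/\ indep set0,
      (forall A B : {set 'I_d}, A \subset B -> indep B -> indep A) &
      (forall A B : {set 'I_d}, indep A -> indep B -> #|A| < #|B| ->
         exists2 x, x \in B :\: A & indep (x |: A))]%N.

Definition dependent (d : nat) (indep : {set 'I_d} -> bool) (S : {set 'I_d}) :=
  ~~ indep S.

Definition circuit (d : nat) (indep : {set 'I_d} -> bool) (C : {set 'I_d}) :=
  dependent indep C /\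
  (forall C' : {set 'I_d}, C' \proper C -> ~~ dependent indep C').

Definition mrank (d : nat) (indep : {set 'I_d} -> bool) : nat :=
  \max_(B : {set 'I_d} | indep B) #|B|.

Definition paving (d n : nat) (indep : {set 'I_d} -> bool) : Prop :=
  is_matroid indep /\ mrank indep = n /\
  (forall C, circuit indep C -> #|C| = n \/ #|C| = n.+1).

Definition nsub_circuits (d n : nat) (indep : {set 'I_d} -> bool)
  (l : {set 'I_d}) : Prop :=
  (n <= #|l|)%N /\
  (forall S : {set 'I_d}, S \subset l -> #|S| = n -> circuit indep S).

Definition dep_hyperplane (d n : nat) (indep : {set 'I_d} -> bool)
  (l : {set 'I_d}) : Prop :=
  nsub_circuits n indep l /\
  (forall l' : {set 'I_d}, l \proper l' -> ~ nsub_circuits n indep l').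

Definition tame (d n : nat) (indep : {set 'I_d} -> bool) : Prop :=
  forall l1 l2 l3 : {set 'I_d},
    dep_hyperplane n indep l1 -> dep_hyperplane n indep l2 ->
    dep_hyperplane n indep l3 ->
    l1 != l2 -> l1 != l3 -> l2 != l3 -> l1 :&: l2 :&: l3 = set0.

Definition fam (C : Type) (d n : nat) (g : 'I_d -> 'rV[C]_n) (S : {set 'I_d}) :=
  [seq g p | p <- enum S].

Definition in_circuit_variety (R : rcfType) (d n : nat)
  (indep : {set 'I_d} -> bool) (g : 'I_d -> 'rV[R[i]]_n) : Prop :=
  forall S : {set 'I_d}, dependent indep S -> ~~ free (fam g S).

Definition cnorm (R : rcfType) (n : nat) (v : 'rV[R[i]]_n) : R :=
  Num.sqrt (\sum_(j < n) (complex.Re (v ord0 j) ^+ 2 + complex.Im (v ord0 j) ^+ 2)).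

(* Main.v *)
Require Import Defs.
From HB Require Import structures.
From mathcomp Require Import all_boot all_order all_algebra.
From mathcomp Require Import reals complex.
From Stdlib Require Import Classical.
From mathcomp Require boolp.
From mathcomp Require Import zify ring lra.
Set Implicit Arguments. Unset Strict Implicit. Unset Printing Implicit Defensive.
Import Order.TTheory GRing.Theory Num.Theory.
Local Open Scope ring_scope.


Definition Sp (K : fieldType) (vT : vectType K) (d : nat) (g : 'I_d -> vT) (A : {set 'I_d}) : {vspace vT} :=
  (\sum_(q in A) <[g q]>)%VS.

Lemma span_fam (K : fieldType) (d n : nat) (g : 'I_d -> 'rV[K]_n) (A : {set 'I_d}) :
  span (fam g A) = Sp g A.
Proof. by rewrite span_def /fam big_map big_enum. Qed.

Lemma free_fam (K : fieldType) (d n : nat) (g : 'I_d -> 'rV[K]_n) (A : {set 'I_d}) :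
  free (fam g A) = (\dim (Sp g A) == #|A|).
Proof. by rewrite /free span_fam /fam size_map cardE. Qed.

Lemma dim_row (K : fieldType) n (U : {vspace 'rV[K]_n}) : (\dim U <= n)%N.
Proof. by have := dimvS (subvf U); rewrite dimvf /dim /= mul1n. Qed.

Lemma dim_line_add (K : fieldType) (vT : vectType K) (v : vT) (U : {vspace vT}) :
  v \notin U -> \dim (<[v]> + U) = (\dim U).+1.
Proof.
move=> vU; rewrite dimv_disjoint_sum; last first.
  apply/eqP; rewrite -subv0; apply/subvP => w; rewrite memv_cap memv0 => /andP[/vlineP[k ->] wU].
  case: (eqVneq k 0) => [->|k0]; first by rewrite scale0r.
  by move: wU; rewrite rpredZeq (negPf k0) (negPf vU).
rewrite dim_vline; have -> : v != 0 by apply: contraNneq vU => ->; rewrite mem0v.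
by rewrite add1n.
Qed.

Lemma dim_line_add_le (K : fieldType) (vT : vectType K) (v : vT) (U : {vspace vT}) :
  (\dim (<[v]> + U) <= (\dim U).+1)%N.
Proof.
case: (dimv_add_leqif <[v]> U) => le _; apply: leq_trans le _.
by rewrite dim_vline; case: (v != 0).
Qed.


Lemma Sp_le (K : fieldType) (vT : vectType K) d (g : 'I_d -> vT) (A : {set 'I_d}) (U : {vspace vT}) :
  (forall q, q \in A -> g q \in U) -> (Sp g A <= U)%VS.
Proof. by move=> H; apply/subv_sumP => q qA; rewrite -memvE H. Qed.

Lemma mem_Sp (K : fieldType) (vT : vectType K) d (g : 'I_d -> vT) (A : {set 'I_d}) p :
  p \in A -> g p \in Sp g A.
Proof. by move=> pA; rewrite memvE; apply: (sumv_sup p). Qed.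

Lemma Sp_sub (K : fieldType) (vT : vectType K) d (g : 'I_d -> vT) (A B : {set 'I_d}) :
  A \subset B -> (Sp g A <= Sp g B)%VS.
Proof. by move=> /subsetP AB; apply: Sp_le => q /AB; apply: mem_Sp. Qed.

Lemma Sp_D1 (K : fieldType) (vT : vectType K) d (g : 'I_d -> vT) (A : {set 'I_d}) p :
  p \in A -> Sp g A = (<[g p]> + Sp g (A :\ p))%VS.
Proof. by move=> pA; rewrite /Sp (big_setD1 p pA). Qed.

Lemma Sp_U1 (K : fieldType) (vT : vectType K) d (g : 'I_d -> vT) (A : {set 'I_d}) p :
  p \notin A -> Sp g (p |: A) = (<[g p]> + Sp g A)%VS.
Proof. by move=> pA; rewrite /Sp big_setU1. Qed.

Lemma Sp_eq (K : fieldType) (vT : vectType K) d (g g' : 'I_d -> vT) (A : {set 'I_d}) :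
  (forall q, q \in A -> g q = g' q) -> Sp g A = Sp g' A.
Proof. by move=> H; apply: eq_bigr => q /H ->. Qed.

Lemma dim_Sp_card (K : fieldType) (vT : vectType K) d (g : 'I_d -> vT) (A : {set 'I_d}) :
  (\dim (Sp g A) <= #|A|)%N.
Proof.
rewrite /Sp; apply: leq_trans (dimv_leq_sum _ _ _) _.
rewrite cardE -sum1_size big_enum /=; apply: leq_sum => q _.
by rewrite dim_vline leq_b1.
Qed.

Lemma indep_sub (K : fieldType) (vT : vectType K) d (g : 'I_d -> vT) (A : {set 'I_d}) k :
  (k <= \dim (Sp g A))%N ->
  exists2 S : {set 'I_d}, S \subset A & #|S| = k /\ \dim (Sp g S) = k.
Proof.
elim: k => [|k IH] H.
  by exists set0; rewrite ?sub0set // cards0 /Sp big_set0 dimv0.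
have [S SA [cS dS]] := IH (ltnW H).
have : ~~ (Sp g A <= Sp g S)%VS.
  by apply/negP => /dimvS; rewrite dS; apply/negP; rewrite -ltnNge.
move/subvPn => [u uA uS].
have : ~~ [forall q, (q \in A) ==> (g q \in Sp g S)].
  apply: contra uS => /forallP Hq; move: u uA; apply/subvP; apply: Sp_le => q qA.
  by have := Hq q; rewrite qA.
rewrite negb_forall => /existsP [q]; rewrite negb_imply => /andP[qA gqS].
have qS : q \notin S by apply: contra gqS; apply: mem_Sp.
exists (q |: S); first by rewrite subUset sub1set qA.
by rewrite cardsU1 qS cS Sp_U1 // dim_line_add // dS.
Qed.


Lemma hyp_sup (d n : nat) (indep : {set 'I_d} -> bool) (S : {set 'I_d}) :
  nsub_circuits n indep S -> exists2 l : {set 'I_d}, S \subset l & dep_hyperplane n indep l.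
Proof.
move: {2}(d - #|S|)%N (leqnn (d - #|S|)) => k.
elim: k S => [|k IH] S Hk HS.
  exists S => //; split => // l' /properP [Sl' [x xl' xS]] _.
  have := max_card l'; rewrite card_ord => cl'.
  have : (#|S| < #|l'|)%N by apply: proper_card; apply/properP; split => //; exists x.
  move: Hk cl'; clear; lia.
case: (classic (exists l' : {set 'I_d}, S \proper l' /\ nsub_circuits n indep l')) => [[l' [Sl' Hl']]|Hno].
  have H1 : (d - #|l'| <= k)%N.
    have := max_card l'; rewrite card_ord => cl'.
    have := proper_card Sl'.
    move: Hk; clear; lia.
  have [l l'l Hl] := IH l' H1 Hl'.
  by exists l => //; apply: subset_trans l'l; apply: proper_sub.
exists S => //; split => // l' Sl' Hl'; apply: Hno; by exists l'.
Qed.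


Lemma hyp_npos (d n : nat) (indep : {set 'I_d} -> bool) l :
  is_matroid indep -> dep_hyperplane n indep l -> (0 < n)%N.
Proof.
case=> i0 _ _ [[_ H] _]; case: n H => // H.
by have [/negP] := H set0 (sub0set _) (cards0 _).
Qed.

Lemma R1 (R : rcfType) (d n : nat) (indep : {set 'I_d} -> bool)
  (g : 'I_d -> 'rV[R[i]]_n) (hg : in_circuit_variety indep g) l :
  dep_hyperplane n indep l -> (\dim (Sp g l) < n)%N.
Proof.
move=> [[_ H] _]; rewrite ltnNge; apply/negP => /indep_sub [S Sl [cS dS]].
have [dep _] := H S Sl cS.
by have := hg S dep; rewrite free_fam dS cS eqxx.
Qed.

Lemma R2 (R : rcfType) (d n : nat) (indep : {set 'I_d} -> bool)
  (hpav : paving n indep) (g : 'I_d -> 'rV[R[i]]_n) :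
  (forall l, dep_hyperplane n indep l -> (\dim (Sp g l) < n)%N) ->
  in_circuit_variety indep g.
Proof.
case: hpav => hmat [_ hcirc] Hl S depS; rewrite free_fam.
case: (ltnP n #|S|) => cS.
  by rewrite neq_ltn (leq_ltn_trans (dim_row _) cS).
pose P k := [exists C : {set 'I_d}, (C \subset S) && ~~ indep C && (#|C| == k)].
have exP : exists k, P k by exists #|S|; apply/existsP; exists S; rewrite subxx eqxx andbT; exact: depS.
case: (ex_minnP exP) => m /existsP [C /andP [/andP [CS depC] /eqP cC]] minm.
have circC : circuit indep C.
  split => // C' C'C; apply/negP; rewrite /dependent => depC'.
  have : P #|C'| by apply/existsP; exists C'; rewrite depC' eqxx (subset_trans (proper_sub C'C) CS).
  by move/minm; rewrite -cC leqNgt proper_card.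
have cCn : #|C| = n.
  have := subset_leq_card CS; case: (hcirc C circC) => -> //; move: cS; clear; lia.
have SC : S = C by apply/eqP; rewrite eq_sym eqEcard CS cCn cS.
subst S.
have nsC : nsub_circuits n indep C.
  split; first by rewrite cCn.
  move=> S' S'C cS'; suff -> : S' = C by []. by apply/eqP; rewrite eqEcard S'C cS' cCn /=.
have [l Cl hl] := hyp_sup nsC.
have h1 := Hl l hl. have h2 := dimvS (Sp_sub g Cl). rewrite cCn.
by rewrite neq_ltn (leq_ltn_trans h2 h1).
Qed.

Lemma tame_one (d n : nat) (indep : {set 'I_d} -> bool) (htame : tame n indep) l p :
  dep_hyperplane n indep l -> p \in l ->
  exists l0, dep_hyperplane n indep l0 /\
    forall l', dep_hyperplane n indep l' -> p \in l' -> l' = l \/ l' = l0.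
Proof.
move=> hl pl.
case: (classic (exists l1, [/\ dep_hyperplane n indep l1, l1 != l & p \in l1])) => [[l1 [h1 n1 p1]]|Hno].
  exists l1; split => // l' h' p'.
  case: (eqVneq l' l) => [->|n'l]; first by left.
  case: (eqVneq l' l1) => [->|n'1]; first by right.
  have := htame _ _ _ hl h1 h' _ _ _; rewrite eq_sym n1 eq_sym n'l eq_sym n'1 => /(_ isT isT isT) E.
  by have := in_set0 p; rewrite -E !inE pl p1 p'.
exists l; split => // l' h' p'; left; apply/eqP; apply/negPn/negP => nl.
by apply: Hno; exists l'.
Qed.


Definition N1 (R : rcfType) n (v : 'rV[R[i]]_n) : R :=
  \sum_(j < n) (`|complex.Re (v ord0 j)| + `|complex.Im (v ord0 j)|).

Lemma N1_ge0 (R : rcfType) n (v : 'rV[R[i]]_n) : 0 <= N1 v.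
Proof. by apply: sumr_ge0 => j _; rewrite addr_ge0. Qed.

Lemma N1D (R : rcfType) n (u v : 'rV[R[i]]_n) : N1 (u + v) <= N1 u + N1 v.
Proof.
rewrite /N1 -big_split /=; apply: ler_sum => j _; rewrite !mxE.
case: (u ord0 j) => a b; case: (v ord0 j) => c e /=.
have := ler_normD a c; have := ler_normD b e; lra.
Qed.

Lemma N1N (R : rcfType) n (v : 'rV[R[i]]_n) : N1 (- v) = N1 v.
Proof.
rewrite /N1; apply: eq_bigr => j _; rewrite !mxE.
by case: (v ord0 j) => a b /=; rewrite !normrN.
Qed.

Lemma N10 (R : rcfType) n : N1 (0 : 'rV[R[i]]_n) = 0.
Proof. by rewrite /N1 big1 // => j _; rewrite mxE /= normr0 addr0. Qed.

Lemma N1Z (R : rcfType) n (c : R) (v : 'rV[R[i]]_n) :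
  N1 ((Complex c 0) *: v) = `|c| * N1 v.
Proof.
rewrite /N1 mulr_sumr; apply: eq_bigr => j _; rewrite !mxE.
case: (v ord0 j) => a b /=.
by rewrite !mul0r subr0 addr0 mulrDr !normrM.
Qed.

Lemma sum_sq_le (R : rcfType) (I : Type) (r : seq I) (f : I -> R) :
  (forall i, 0 <= f i) -> \sum_(i <- r) f i ^+ 2 <= (\sum_(i <- r) f i) ^+ 2.
Proof.
move=> f0; elim: r => [|a r IH]; first by rewrite !big_nil expr0n.
rewrite !big_cons.
have h : 0 <= \sum_(i <- r) f i by apply: sumr_ge0.
have := f0 a; nra.
Qed.

Lemma cnorm_N1 (R : rcfType) n (v : 'rV[R[i]]_n) : cnorm v <= N1 v.
Proof.
rewrite /cnorm -(ger0_norm (N1_ge0 v)) -sqrtr_sqr; apply: ler_wsqrtr.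
apply: le_trans (sum_sq_le _ _) => [|j]; last by rewrite addr_ge0.
apply: ler_sum => j _.
set a := complex.Re _; set b := complex.Im _.
rewrite -[a ^+ 2]real_normK ?num_real // -[b ^+ 2]real_normK ?num_real //.
have := normr_ge0 a; have := normr_ge0 b; nra.
Qed.


Lemma two_vals (K : fieldType) (vT : vectType K) (Z : {vspace vT}) (v x : vT) (c1 c2 : K) :
  c1 != c2 -> v + c1 *: x \in Z -> v + c2 *: x \in Z -> x \in Z /\ v \in Z.
Proof.
move=> ne h1 h2.
have hx : x \in Z.
  have := memvB h1 h2; rewrite opprD addrACA subrr add0r -scalerBl.
  by rewrite rpredZeq subr_eq0 (negPf ne).
split => //; have := memvB h1 (memvZ c1 hx); by rewrite addrK.
Qed.

Definition upd (K : fieldType) (vT : vectType K) d (g : 'I_d -> vT) (p : 'I_d) (v : vT) :=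
  fun q => if q == p then v else g q.

Lemma Sp_upd_in (K : fieldType) (vT : vectType K) d (g : 'I_d -> vT) p v (A : {set 'I_d}) :
  p \in A -> Sp (upd g p v) A = (<[v]> + Sp g (A :\ p))%VS.
Proof.
move=> pA; rewrite (Sp_D1 _ pA) /upd eqxx; congr (_ + _)%VS.
by apply: Sp_eq => q; rewrite !inE => /andP[/negPf -> _].
Qed.

Lemma Sp_upd_out (K : fieldType) (vT : vectType K) d (g : 'I_d -> vT) p v (A : {set 'I_d}) :
  p \notin A -> Sp (upd g p v) A = Sp g A.
Proof.
move=> pA; apply: Sp_eq => q qA; rewrite /upd; case: eqP => // E.
by move: pA; rewrite -E qA.
Qed.

Lemma dim_mono (K : fieldType) (vT : vectType K) (v w : vT) (W0 : {vspace vT}) :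
  (v \notin W0 -> w \notin W0) -> (\dim (<[v]> + W0) <= \dim (<[w]> + W0))%N.
Proof.
case: (boolP (v \in W0)) => [vW _|vW /(_ isT) wW].
  by rewrite (addv_idPr _) -?memvE // dimvS // addvSr.
by rewrite !dim_line_add.
Qed.

Definition isH d n (indep : {set 'I_d} -> bool) (l : {set 'I_d}) : bool :=
  if boolp.pselect (dep_hyperplane n indep l) then true else false.

Lemma isHP d n (indep : {set 'I_d} -> bool) l : isH n indep l <-> dep_hyperplane n indep l.
Proof. by rewrite /isH; case: boolp.pselect. Qed.

Definition Vp (K : fieldType) (vT : vectType K) d n (indep : {set 'I_d} -> bool) (g : 'I_d -> vT) :=
  forall l, dep_hyperplane n indep l -> (\dim (Sp g l) <= n.-1)%N.

Definition mu (K : fieldType) (vT : vectType K) d n (indep : {set 'I_d} -> bool) (g : 'I_d -> vT) :=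
  (\sum_(l : {set 'I_d} | isH n indep l) (n.-1 - \dim (Sp g l)))%N.

Lemma mu_lt (K : fieldType) (vT : vectType K) d n (indep : {set 'I_d} -> bool) (g g' : 'I_d -> vT) l :
  dep_hyperplane n indep l ->
  (forall l', dep_hyperplane n indep l' -> \dim (Sp g l') <= \dim (Sp g' l'))%N ->
  (\dim (Sp g l) < \dim (Sp g' l) <= n.-1)%N ->
  (mu n indep g' < mu n indep g)%N.
Proof.
move=> hl hle /andP[lt1 le2].
have Hl : isH n indep l by apply/isHP.
rewrite /mu (bigD1 l Hl) [X in (_ < X)%N](bigD1 l Hl) /=.
rewrite -addSn; apply: leq_add; first by move: lt1 le2; clear; lia.
apply: leq_sum => l' /andP[/isHP h' _]; have := hle l' h'; clear; lia.
Qed.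


Lemma step (R : rcfType) (d n : nat) (indep : {set 'I_d} -> bool)
  (hpav : paving n indep) (htame : tame n indep)
  (g : 'I_d -> 'rV[R[i]]_n) (hg : Vp n indep g) l (hl : dep_hyperplane n indep l)
  (hr : (\dim (Sp g l) < n.-1)%N) (eps : R) (heps : 0 < eps) :
  exists g' : 'I_d -> 'rV[R[i]]_n,
    [/\ Vp n indep g', (mu n indep g' < mu n indep g)%N &
        forall q, N1 (g q - g' q) < eps].
Proof.
set r := \dim (Sp g l).
have cl : (n <= #|l|)%N by case: hl => [[]].
have [S Sl [cS dS]] := indep_sub (leqnn r).
have [p pl pS] : exists2 p, p \in l & p \notin S.
  apply/exists_inP; rewrite -negb_forall_in; apply/negP => /forall_inP H.
  have : l \subset S by apply/subsetP => q /H.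
  move/subset_leq_card; rewrite cS; move: cl hr; clear; lia.
have eSl : Sp g S = Sp g l.
  by apply/eqP; rewrite eqEdim Sp_sub //= dS.
set W := Sp g (l :\ p).
have gpW : g p \in W.
  have sub : (Sp g S <= W)%VS.
    apply: Sp_sub; apply/subsetP => q qS; rewrite !inE (subsetP Sl) // andbT.
    by apply: contraNneq pS => <-.
  by move/subvP: sub; apply; rewrite eSl mem_Sp.
have eWl : Sp g l = W by rewrite (Sp_D1 _ pl) (addv_idPr _) // -memvE.
have dW : \dim W = r by rewrite -eWl.
have [l0 [hl0 Hl0]] := tame_one htame hl pl.
set U := if \dim (Sp g l0) == n.-1 then Sp g l0 else fullv.
have dU : (n.-1 <= \dim U)%N.
  rewrite /U; case: eqP => [->//|_]; rewrite dimvf /dim /= mul1n; clear; lia.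
have [x xU xW] : exists2 x, x \in U & x \notin W.
  apply/subvPn; apply/negP => /dimvS; rewrite dW; move: dU hr; rewrite -/r; clear; lia.
set W0 := Sp g (l0 :\ p).
set a := eps / (N1 x + 1).
have ha : 0 < a by rewrite divr_gt0 // ltr_pwDr // N1_ge0.
pose bad (c : R) := (g p + Complex c 0 *: x \in W) || ((g p \notin W0) && (g p + Complex c 0 *: x \in W0)).
have cne : forall c1 c2 : R, c1 != c2 -> Complex c1 0 != Complex c2 0.
  by move=> c1 c2; apply: contraNneq => -[->].
have hC1 : forall c1 c2, c1 != c2 -> g p + Complex c1 0 *: x \in W -> g p + Complex c2 0 *: x \in W -> False.
  move=> c1 c2 /cne ne h1 h2; have [] := two_vals ne h1 h2; by rewrite (negPf xW).
have hC2 : forall c1 c2, c1 != c2 -> (g p \notin W0) && (g p + Complex c1 0 *: x \in W0) ->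
    (g p \notin W0) && (g p + Complex c2 0 *: x \in W0) -> False.
  move=> c1 c2 /cne ne /andP[nW h1] /andP[_ h2]; have [_] := two_vals ne h1 h2; by rewrite (negPf nW).
have n12 : a != a / 2 by apply/negP => /eqP; lra.
have n13 : a != a / 4 by apply/negP => /eqP; lra.
have n23 : a / 2 != a / 4 by apply/negP => /eqP; lra.
have [c [hc0 hcA hgood]] : exists c, [/\ 0 < c, c <= a & ~~ bad c].
  case Ha: (bad a); last by exists a; split => //; rewrite Ha.
  case Hb: (bad (a / 2)); last by exists (a / 2); split; rewrite ?Hb //; lra.
  case Hc: (bad (a / 4)); last by exists (a / 4); split; rewrite ?Hc //; lra.
  exfalso; move: Ha Hb Hc; rewrite /bad => /orP[h1|h1] /orP[h2|h2] /orP[h3|h3];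
  first [ exact: hC1 n12 h1 h2 | exact: hC1 n13 h1 h3 | exact: hC1 n23 h2 h3
        | exact: hC2 n12 h1 h2 | exact: hC2 n13 h1 h3 | exact: hC2 n23 h2 h3 ].
set v' := g p + Complex c 0 *: x.
have hv'W : v' \notin W by apply: contra hgood => h; rewrite /bad h.
have hv'W0 : g p \notin W0 -> v' \notin W0.
  by move=> h; apply: contra hgood => h'; rewrite /bad h h' orbT.
set g' := upd g p v'.
have hl' : Sp g' l = (<[v']> + W)%VS by rewrite Sp_upd_in.
have dl' : \dim (Sp g' l) = r.+1 by rewrite hl' dim_line_add // dW.
have key : forall l', dep_hyperplane n indep l' ->
    (\dim (Sp g l') <= \dim (Sp g' l') <= n.-1)%N.
  move=> l' h'; case: (boolP (p \in l')) => pl'; last first.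
    by rewrite Sp_upd_out // leqnn hg.
  case: (eqVneq l' l) => [->|nl].
    by rewrite dl' -/r; move: hr; clear; lia.
  have el0 : l' = l0 by case: (Hl0 l' h' pl') => // E; rewrite E eqxx in nl.
  subst l'.
  have e1 : Sp g l0 = (<[g p]> + W0)%VS by rewrite (Sp_D1 _ pl').
  have e2 : Sp g' l0 = (<[v']> + W0)%VS by rewrite (Sp_upd_in _ _ pl').
  rewrite e2 e1 dim_mono //=.
  case: (eqVneq (\dim (Sp g l0)) n.-1) => [E|NE].
    have xl0 : x \in Sp g l0 by move: xU; rewrite /U E eqxx.
    have v'l0 : v' \in Sp g l0 by rewrite memvD ?memvZ // mem_Sp.
    rewrite -E e1; apply: dimvS; rewrite subv_add -memvE -e1 v'l0 /=.
    by rewrite e1 addvSr.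
  have lt0 : (\dim (Sp g l0) < n.-1)%N by rewrite ltn_neqAle NE hg.
  have le0 : (\dim W0 <= \dim (Sp g l0))%N by rewrite e1 dimvS // addvSr.
  apply: leq_trans (dim_line_add_le _ _) _; move: lt0 le0; clear; lia.
exists g'; split.
- by move=> l' h'; have /andP[] := key l' h'.
- apply: (mu_lt hl) => [l' h'|]; first by have /andP[] := key l' h'.
  by rewrite dl' -/r leqnn /=; move: hr; clear; lia.
- move=> q; rewrite /g' /upd; case: eqP => [->|_]; last by rewrite subrr N10.
  rewrite /v' opprD addNKr N1N N1Z.
  have hx0 := N1_ge0 x.
  have e : a * (N1 x + 1) = eps by rewrite /a divfK // gt_eqF // ltr_pwDr.
  rewrite ger0_norm; last by apply: ltW.
  nra.
Qed.


Lemma main_ind (R : rcfType) (d n : nat) (indep : {set 'I_d} -> bool)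
  (hpav : paving n indep) (htame : tame n indep) (m : nat) :
  forall (g : 'I_d -> 'rV[R[i]]_n), Vp n indep g -> (mu n indep g <= m)%N ->
  forall eps : R, 0 < eps ->
  exists gt : 'I_d -> 'rV[R[i]]_n,
    [/\ Vp n indep gt, (forall q, N1 (g q - gt q) < eps) &
        forall l, dep_hyperplane n indep l -> \dim (Sp gt l) = n.-1].
Proof.
elim: m => [|m IH] g hg hm eps heps.
- exists g; split => // [q|l hl]; first by rewrite subrr N10.
  apply/eqP; rewrite eqn_leq hg //=.
  have Hl : isH n indep l by apply/isHP.
  move: hm; rewrite leqn0 /mu (bigD1 l Hl) /= addn_eq0 subn_eq0 => /andP[] //.
- case: (classic (forall l, dep_hyperplane n indep l -> \dim (Sp g l) = n.-1)) => [H|H].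
    by exists g; split => // q; rewrite subrr N10.
  have [l [hl hne]] : exists l, dep_hyperplane n indep l /\ \dim (Sp g l) <> n.-1.
    apply: NNPP => H2; apply: H => l hl; apply: NNPP => H3; apply: H2; by exists l.
  have hr : (\dim (Sp g l) < n.-1)%N by rewrite ltn_neqAle hg // andbT; apply/eqP.
  have heps2 : 0 < eps / 2 by lra.
  have [g' [hg' hmu hd]] := step hpav htame hg hl hr heps2.
  have hm' : (mu n indep g' <= m)%N by move: hmu hm; clear; lia.
  have [gt [hgt hd2 hgood]] := IH g' hg' hm' _ heps2.
  exists gt; split => // q.
  have -> : g q - gt q = (g q - g' q) + (g' q - gt q) by rewrite addrA subrK.
  apply: le_lt_trans (N1D _ _) _; have := hd q; have := hd2 q; lra.
Qed.

Unset Implicit Arguments.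


Theorem lemma8p3 (R : realType) (d n : nat) (indep : {set 'I_d} -> bool)
  (hpav : paving n indep) (htame : tame n indep)
  (g : 'I_d -> 'rV[R[i]]_n) (hg : in_circuit_variety indep g)
  (eps : R) (heps : 0 < eps) :
  exists gt : 'I_d -> 'rV[R[i]]_n,
    [/\ in_circuit_variety indep gt,
        (forall p : 'I_d, cnorm (g p - gt p) < eps) &
        (forall l : {set 'I_d}, dep_hyperplane n indep l ->
           \dim (span (fam gt l)) = n.-1)].
Proof.
have hV : Vp n indep g.
  by move=> l hl; have h := R1 hg hl; rewrite -ltnS prednK //; exact: leq_ltn_trans (leq0n _) h.
have [gt [hgt hd hgood]] := main_ind hpav htame hV (leqnn _) heps.
exists gt; split.
- apply: R2 => // l hl; rewrite hgood //.
  by rewrite ltn_predL (hyp_npos (proj1 hpav) hl).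
- by move=> q; apply: le_lt_trans (cnorm_N1 _) (hd q).
- by move=> l hl; rewrite span_fam hgood.
Qed.
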